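(* Assume the setting of the transformation mechanism below, and further assume $a\ge0$ and that every record $r$ has attribute $r.c\ge0$. Let $q(D)=\sum_{r\in D}r.c$. Then the per-record sensitivity of $D\mapsto f(q(D)+a)$ is $\Delta_f(r)=f(r.c+a)-f(a)$, and the mechanism $M(D)=g\big(f(q(D)+a)+Z\big)$, $Z\sim\operatorname{Lap}(0,b)$, satisfies $P$-PRDP with policy function $P(r)=[f(r.c+a)-f(a)]/b$.
   Context: Setting: $b\in(0,\infty)$, $f:[a,\infty)\to\mathbb{R}$ is concave and strictly increasing, $g:\mathbb{R}\to\mathbb{R}$ is measurable, and $Z\sim\operatorname{Lap}(0,b)$ (density $\frac{1}{2b}e^{-|x|/b}$) is independent of the data. Databases are finite multisets of records (including the empty database); $D,D'$ are neighbors differing on record $r$ if their symmetric difference $D\ominus D'=\{r\}$. The per-record sensitivity of a real-valued query $u$ at record $r$ is $\sup\{|u(D)-u(D')|:D\ominus D'=\{r\}\}$. A mechanism $M$ satisfies $P$-PRDP if for every record $r$, every $D,D'$ with $D\ominus D'=\{r\}$, and every measurable $S$, $\Pr[M(D)\in S]\le e^{P(r)}\Pr[M(D')\in S]$. *)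

(* Defs.v *)
From HB Require Import structures.
From mathcomp Require Import all_boot all_order all_algebra.
From mathcomp Require Import all_classical all_reals all_analysis.
From Stdlib Require Import Permutation.
Set Implicit Arguments. Unset Strict Implicit. Unset Printing Implicit Defensive.
Import Order.TTheory GRing.Theory Num.Theory.
Local Open Scope classical_set_scope.
Local Open Scope ring_scope.

(* A database is a finite multiset of records, represented by a list
   (order irrelevant: all notions below are invariant under permutation). *)
Definition database (rec : Type) := seq rec.

(* D and D' are neighbours differing on record r: the multiset symmetric
   difference of D and D' is exactly {r}, i.e. one of them is the other
   with one extra copy of r. *)
Definition neighbors (rec : Type) (r : rec) (D D' : database rec) : Prop :=
  Permutation D (r :: D') \/ Permutation D' (r :: D).

Definition per_record_sensitivity (R : realType) (rec : Type)
  (u : database rec -> R) (r : rec) : \bar R :=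
  ereal_sup [set e : \bar R | exists D D' : database rec,
                 neighbors r D D' /\ e = (`|u D - u D'|)%:E].

Definition sum_query (R : realType) (rec : Type) (c : rec -> R)
  (D : database rec) : R := \sum_(x <- D) c x.

Definition is_laplace (R : realType) (d : measure_display) (T : measurableType d)
  (Pr : probability T R) (b : R) (Z : T -> R) : Prop :=
  measurable_fun setT Z /\
  forall A : set R, measurable A ->
    Pr (Z @^-1` A) =
    (\int[@lebesgue_measure R]_(x in A) ((2 * b)^-1 * expR (- `|x| / b))%:E)%E.

Definition PRDP (R : realType) (d : measure_display) (T : measurableType d)
  (Pr : probability T R) (rec : Type) (M : database rec -> T -> R)
  (P : rec -> R) : Prop :=
  forall (r : rec) (D D' : database rec), neighbors r D D' ->
  forall S : set R, measurable S ->
    (Pr (M D @^-1` S) <= (expR (P r))%:E * Pr (M D' @^-1` S))%E.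

(* Main.v *)
Require Import Defs.
From HB Require Import structures.
From mathcomp Require Import all_boot all_order all_algebra.
From mathcomp Require Import all_classical all_reals all_analysis.
From mathcomp Require Import ring lra measurable_realfun.
From Stdlib Require Import Permutation.
Import Order.TTheory GRing.Theory Num.Theory.
Local Open Scope classical_set_scope.
Local Open Scope ring_scope.


Lemma sum_query_perm (R : realType) (rec : Type) (c : rec -> R) (D D' : seq rec) :
  Permutation D D' -> sum_query c D = sum_query c D'.
Proof.
rewrite /sum_query; elim => [|x l l' _ IH|x y l|l l' l'' _ IH1 _ IH2].
- by [].
- by rewrite !big_cons IH.
- by rewrite !big_cons addrCA.
- by rewrite IH1 IH2.
Qed.

Lemma sum_query_ge0 (R : realType) (rec : Type) (c : rec -> R) (D : seq rec) :
  (forall r, 0 <= c r) -> 0 <= sum_query c D.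
Proof. by move=> c0; rewrite /sum_query; apply: sumr_ge0. Qed.

Lemma concave_incr (R : realType) (a : R) (f : R -> R) :
  (forall x y t, a <= x -> a <= y -> 0 <= t <= 1 ->
     t * f x + (1 - t) * f y <= f (t * x + (1 - t) * y)) ->
  forall y s h, a <= y -> 0 <= s -> 0 <= h ->
  f (y + s + h) - f (y + s) <= f (y + h) - f y.
Proof.
move=> cf y s h ay s0 h0.
have [sh0|shn0] := eqVneq (s + h) 0.
  have s00 : s = 0 by lra.
  have h00 : h = 0 by lra.
  by rewrite s00 h00 !addr0 subrr.
have shp : 0 < s + h by rewrite lt_neqAle eq_sym shn0 /=; lra.
set t := h / (s + h).
have t0 : 0 <= t by rewrite /t divr_ge0 //; lra.
have t1 : t <= 1 by rewrite /t ler_pdivrMr // mul1r; lra.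
have az : a <= y + s + h by lra.
have H1 := cf y (y + s + h) t ay az (introT andP (conj t0 t1)).
have t0' : 0 <= 1 - t by lra.
have t1' : 1 - t <= 1 by lra.
have H2 := cf y (y + s + h) (1 - t) ay az (introT andP (conj t0' t1')).
have e1 : t * y + (1 - t) * (y + s + h) = y + s.
  rewrite /t; field; exact: shn0.
have e2 : (1 - t) * y + (1 - (1 - t)) * (y + s + h) = y + h.
  rewrite /t; field; exact: shn0.
rewrite e1 in H1; rewrite e2 in H2.
rewrite (_ : 1 - (1 - t) = t) in H2; last by ring.
lra.
Qed.



Lemma incr_le (R : realType) (a : R) (f : R -> R) :
  (forall x y, a <= x -> x < y -> f x < f y) ->
  forall x h, a <= x -> 0 <= h -> f x <= f (x + h).
Proof.
move=> fi x h ax; rewrite le_eqVlt => /predU1P[<-|hp]; first by rewrite addr0.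
by apply/ltW/fi => //; lra.
Qed.

Lemma neighbor_bound (R : realType) (rec : Type) (c : rec -> R) (a : R) (f : R -> R) :
  0 <= a -> (forall r, 0 <= c r) ->
  (forall x y t, a <= x -> a <= y -> 0 <= t <= 1 ->
     t * f x + (1 - t) * f y <= f (t * x + (1 - t) * y)) ->
  (forall x y, a <= x -> x < y -> f x < f y) ->
  forall r D D', neighbors r D D' ->
  `|f (sum_query c D + a) - f (sum_query c D' + a)| <= f (c r + a) - f a.
Proof.
move=> a0 c0 cf fi r D D'.
have key : forall D1 D2, Permutation D1 (r :: D2) ->
    `|f (sum_query c D1 + a) - f (sum_query c D2 + a)| <= f (c r + a) - f a.
  move=> D1 D2 /sum_query_perm ->; rewrite /sum_query big_cons -/(sum_query c D2).
  have q0 := @sum_query_ge0 R rec c D2 c0.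
  set q := sum_query c D2.
  have h1 := @concave_incr R a f cf a q (c r) (le_refl a) q0 (c0 r).
  have h2 := @incr_le R a f fi (q + a) (c r).
  have e1 : c r + q + a = a + q + c r by lra.
  have e2 : q + a = a + q by lra.
  have e3 : c r + a = a + c r by lra.
  have e4 : c r + q + a = q + a + c r by lra.
  rewrite ger0_norm; first by rewrite e1 e2 e3.
  rewrite subr_ge0 e4; apply: h2; first by rewrite lerDr.
  exact: c0.
case=> H; first exact: key.
by rewrite distrC; exact: key.
Qed.



Lemma sens (R : realType) (rec : Type) (c : rec -> R) (a : R) (f : R -> R) :
  0 <= a -> (forall r, 0 <= c r) ->
  (forall x y t, a <= x -> a <= y -> 0 <= t <= 1 ->
     t * f x + (1 - t) * f y <= f (t * x + (1 - t) * y)) ->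
  (forall x y, a <= x -> x < y -> f x < f y) ->
  forall r : rec,
     per_record_sensitivity (fun D => f (sum_query c D + a)) r
     = (f (c r + a) - f a)%:E.
Proof.
move=> a0 c0 cf fi r; rewrite /per_record_sensitivity.
apply: le_anti; apply/andP; split.
  apply: ub_ereal_sup => _ [D [D' [HN ->]]].
  rewrite lee_fin; exact: neighbor_bound HN.
apply: ereal_sup_ubound; exists [:: r], [::]; split.
  by left; apply: Permutation_refl.
rewrite /sum_query big_cons big_nil addr0 add0r ger0_norm //.
rewrite subr_ge0 (_ : c r + a = a + c r); last by rewrite addrC.
exact: incr_le fi _ _ (le_refl a) (c0 r).
Qed.


Section shift_measure.
Context (R : realType) (m : R).
Lemma mshift : measurable_fun setT (fun x : R => (x + m)%R).
Proof. by apply: measurable_funD => //; exact: measurable_cst. Qed.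
Local Open Scope ereal_scope.

Definition shiftmu : set (measurableTypeR R) -> \bar R :=
  pushforward (@lebesgue_measure R) (fun x : R => (x + m)%R).

Let shiftmu0 : shiftmu set0 = 0.
Proof. by rewrite /shiftmu /pushforward preimage_set0 measure0. Qed.

Let shiftmu_ge0 A : 0 <= shiftmu A.
Proof. rewrite /shiftmu /pushforward; exact: (measure_ge0 (@lebesgue_measure R)). Qed.

Let shiftmu_sigma_additive : semi_sigma_additive shiftmu.
Proof.
move=> F mF tF mUF; rewrite /shiftmu /pushforward preimage_bigcup.
apply: measure_semi_sigma_additive.
- move=> n; have := mshift measurableT (F n) (mF n); rewrite setTI; exact.
- apply/trivIsetP => /= i j _ _ ij; rewrite -preimage_setI.
  by move/trivIsetP : tF => /(_ _ _ _ _ ij) ->//; rewrite preimage_set0.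
- rewrite -preimage_bigcup; have := mshift measurableT _ mUF; rewrite setTI; exact.
Qed.

HB.instance Definition _ := isMeasure.Build _ _ _
  shiftmu shiftmu0 shiftmu_ge0 shiftmu_sigma_additive.

Lemma leb_shift (A : set R) : measurable A ->
  (@lebesgue_measure R) ((fun x : R => (x + m)%R) @^-1` A) = lebesgue_measure A.
Proof.
move=> mA; symmetry.
apply: (@lebesgue_measure_unique R shiftmu) => // X [[x y] _ <-].
rewrite -[RHS]/((@lebesgue_measure R) ((fun z : R => (z + m)%R) @^-1` `]x, y]%classic)).
have -> : (fun z : R => (z + m)%R) @^-1` `]x, y]%classic = `](x - m)%R, (y - m)%R]%classic.
  apply/seteqP; split => z /=; rewrite !in_itv /= => /andP [h1 h2]; apply/andP; split; lra.
rewrite !lebesgue_measure_itv /= !lte_fin.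
have -> : (x - m < y - m)%R = (x < y)%R by rewrite ltrD2r.
case: ifP => // _; rewrite -!EFinD; congr (_%:E); lra.
Qed.
End shift_measure.

Section integral_shift.
Context (R : realType).
Local Open Scope ereal_scope.

Lemma integral_shift (m : R) (B : set R) (h : R -> R) : measurable B ->
  measurable_fun setT h -> (forall x, (0 <= h x)%R) ->
  \int[@lebesgue_measure R]_(x in (fun x : R => (x + m)%R) @^-1` B) (h x)%:E =
  \int[@lebesgue_measure R]_(y in B) (h (y - m)%R)%:E.
Proof.
move=> mB mh h0.
transitivity (\int[@pushforward _ _ (measurableTypeR R) (measurableTypeR R) R (@lebesgue_measure R) (fun x : R => (x + m)%R)]_(y in B) (h (y - m)%R)%:E); last first.
  apply: eq_measure_integral; first exact: mshift.
  move=> ? X mX _.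
  transitivity ((@lebesgue_measure R) ((fun x : R => (x + m)%R) @^-1` X)); first by [].
  exact: (@leb_shift R m X mX).
rewrite ge0_integral_pushforward //.
- by apply: eq_integral => x _ /=; rewrite addrK.
- exact: mshift.
- have hm : measurable_fun setT (fun y : R => h (y - m)%R) := measurableT_comp mh (@mshift R (- m)%R).
  apply/measurable_EFinP; exact: measurable_funS hm.
- by move=> y _; rewrite lee_fin.
Qed.
End integral_shift.



Section laplace.
Context (R : realType) (b : R) (d : measure_display) (T : measurableType d)
  (Pr : probability T R) (Z : T -> R) (g : R -> R).
Hypothesis b0 : 0 < b.
Hypothesis mg : measurable_fun setT g.
Hypothesis HZ : is_laplace Pr b Z.

Definition lap (x : R) : R := (2 * b)^-1 * expR (- `|x| / b).

Lemma lap_ge0 x : 0 <= lap x.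
Proof. rewrite /lap mulr_ge0 // ?expR_ge0 // invr_ge0; apply: mulr_ge0 => //; exact: ltW. Qed.

Lemma lap_meas : measurable_fun setT lap.
Proof.
apply: measurable_funM; first exact: measurable_cst.
apply: measurableT_comp; first exact: measurable_expR.
apply: measurable_funM; last exact: measurable_cst.
apply: measurable_funN; exact: normr_measurable.
Qed.

Lemma lap_shift_le (y e : R) : lap (y - e) <= expR (`|e| / b) * lap y.
Proof.
rewrite /lap mulrCA ler_pM2l; last by rewrite invr_gt0 mulr_gt0.
rewrite -expRD ler_expR -mulrDl ler_pM2r; last by rewrite invr_gt0.
have := ler_normD (y - e) e; rewrite subrK; lra.
Qed.

Lemma PrZ (A : set R) : measurable A ->
  Pr (Z @^-1` A) = (\int[@lebesgue_measure R]_(x in A) (lap x)%:E)%E.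
Proof. by move=> mA; case: HZ => _ ->. Qed.

Lemma lap_main (mu mu' : R) (S : set R) : measurable S ->
  (Pr ((fun w => g (mu + Z w)) @^-1` S) <=
   (expR (`|mu - mu'| / b))%:E * Pr ((fun w => g (mu' + Z w)) @^-1` S))%E.
Proof.
move=> mS.
have mB' : measurable ((fun z => g (mu' + z)) @^-1` S).
  have mf : measurable_fun setT (fun z => g (mu' + z)).
    apply: measurableT_comp mg _.
    by apply: measurable_funD => //; exact: measurable_cst.
  by have := mf measurableT S mS; rewrite setTI.
set B' := (fun z => g (mu' + z)) @^-1` S.
have -> : (fun w => g (mu + Z w)) @^-1` S =
    Z @^-1` ((fun x : R => (x + (mu - mu'))%R) @^-1` B').
  apply/seteqP; split => w /=; rewrite /B' /=;
    by rewrite (_ : mu' + (Z w + (mu - mu')) = mu + Z w) //; ring.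
have mB : measurable ((fun x : R => (x + (mu - mu'))%R) @^-1` B').
  by have := @mshift R (mu - mu') measurableT _ mB'; rewrite setTI.
have PZ : forall A, measurable A -> Pr (Z @^-1` A) = (\int[@lebesgue_measure R]_(x in A) (lap x)%:E)%E.
  by move=> A mA; case: HZ => _ ->.
rewrite (PZ _ mB) (PZ _ mB') integral_shift //; last 2 first.
  exact lap_meas.
  exact: lap_ge0.
rewrite -ge0_integralZl //; last 2 first.
  by apply/measurable_EFinP; apply: measurable_funTS; exact lap_meas.
  by move=> x _; rewrite lee_fin lap_ge0.
apply: ge0_le_integral => //.
- by move=> x _; rewrite lee_fin lap_ge0.
- apply/measurable_EFinP; apply: measurable_funTS.
  exact (measurableT_comp lap_meas (@mshift R (- (mu - mu'))%R)).
- apply/measurable_EFinP; apply: measurable_funTS.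
  by apply: measurable_funM => //; exact lap_meas.
- by move=> x _; rewrite -EFinM lee_fin lap_shift_le.
Qed.
End laplace.


Theorem mainTheorem9 (R : realType) (rec : Type) (c : rec -> R)
  (a b : R) (f g : R -> R)
  (d : measure_display) (T : measurableType d) (Pr : probability T R) (Z : T -> R) :
  0 < b -> 0 <= a -> (forall r, 0 <= c r) ->
  (* f : [a, oo) -> R is concave *)
  (forall x y t, a <= x -> a <= y -> 0 <= t <= 1 ->
     t * f x + (1 - t) * f y <= f (t * x + (1 - t) * y)) ->
  (* f is strictly increasing on [a, oo) *)
  (forall x y, a <= x -> x < y -> f x < f y) ->
  measurable_fun setT g ->
  is_laplace Pr b Z ->
  (forall r : rec,
     per_record_sensitivity (fun D => f (sum_query c D + a)) r
     = (f (c r + a) - f a)%:E)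
  /\
  PRDP Pr (fun D (w : T) => g (f (sum_query c D + a) + Z w))
       (fun r => (f (c r + a) - f a) / b).
Proof.
move=> b0 a0 c0 cf fi mg HZ; split; first exact: sens.
move=> r D D' HN S mS /=.
have H := @lap_main R b d T Pr Z g b0 mg HZ (f (sum_query c D + a)) (f (sum_query c D' + a)) S mS.
apply: le_trans H _.
apply: lee_wpmul2r; first exact: measure_ge0.
rewrite lee_fin ler_expR; apply: ler_wpM2r; first by rewrite invr_ge0 ltW.
exact: neighbor_bound HN.
Qed.
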